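(* Let $P$ be a generic set of $n$ points in the plane in convex position. Then $\operatorname{cr}(P)\ge \lfloor n/2\rfloor -1$.
   Context: A finite planar point set is in general position if no three of its points are collinear. It is generic if it is in general position and every subset of it has a unique (Euclidean) minimum spanning tree (MST); for a generic set $X$, $T_X$ denotes the MST of $X$, drawn with straight-line edges. For disjoint point sets $R,B$ with $R\cup B$ generic, $\operatorname{cr}(R,B)$ denotes the number of crossings between the edges of $T_R$ and the edges of $T_B$. For a generic point set $P$, $\operatorname{cr}(P)=\max \operatorname{cr}(R,B)$, the maximum over all partitions $P=R\cup B$ into two disjoint sets. *)

(* Defs.v *)
From HB Require Import structures.
From mathcomp Require Import all_boot all_order all_algebra.
From mathcomp Require Import boolp reals.

Set Implicit Arguments.
Unset Strict Implicit.
Unset Printing Implicit Defensive.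

Import Order.TTheory GRing.Theory Num.Theory.
Local Open Scope ring_scope.

Section MSTCrossings.
Variable R : realType.
Variable n : nat.
Variable p : 'I_n -> R * R.

Definition dist (a b : R * R) : R :=
  Num.sqrt ((a.1 - b.1) ^+ 2 + (a.2 - b.2) ^+ 2).

(* an edge {i,j} is stored as the ordered pair (i,j) with i < j *)
Definition edge := ('I_n * 'I_n)%type.

Definition adj (E : {set edge}) : rel 'I_n :=
  fun u v => ((u, v) \in E) || ((v, u) \in E).

Definition edges_in (S : {set 'I_n}) (E : {set edge}) : Prop :=
  forall e, e \in E -> [/\ (e.1 < e.2)%N, e.1 \in S & e.2 \in S].

Definition connected_on (S : {set 'I_n}) (E : {set edge}) : Prop :=
  forall u v, u \in S -> v \in S ->
    exists s : seq 'I_n, path (adj E) u s /\ last u s = v.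

Definition acyclic (E : {set edge}) : Prop :=
  forall s : seq 'I_n, uniq s -> (2 < size s)%N -> ~~ cycle (adj E) s.

Definition spanning_tree (S : {set 'I_n}) (E : {set edge}) : Prop :=
  [/\ edges_in S E, connected_on S E & acyclic E].

Definition weight (E : {set edge}) : R :=
  \sum_(e in E) dist (p e.1) (p e.2).

Definition is_MST (S : {set 'I_n}) (E : {set edge}) : Prop :=
  spanning_tree S E /\
  forall E', spanning_tree S E' -> weight E <= weight E'.

Definition collinear (a b c : R * R) : bool :=
  (b.1 - a.1) * (c.2 - a.2) - (b.2 - a.2) * (c.1 - a.1) == 0.

Definition general_position : Prop :=
  forall i j k, i != j -> j != k -> i != k -> ~~ collinear (p i) (p j) (p k).

Definition generic : Prop :=
  [/\ injective p, general_position &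
      forall S : {set 'I_n}, exists! E, is_MST S E].

(* T_X : the MST of the subset X (well defined for generic sets) *)
Definition MST (S : {set 'I_n}) : {set edge} :=
  odflt set0 [pick E | `[< is_MST S E >]].

Definition seg_cross (a b c d : R * R) : Prop :=
  exists t s : R, [/\ 0 <= t <= 1, 0 <= s <= 1,
    (1 - t) * a.1 + t * b.1 = (1 - s) * c.1 + s * d.1 &
    (1 - t) * a.2 + t * b.2 = (1 - s) * c.2 + s * d.2].

(* cr(R,B) with R = A and B = complement of A *)
Definition crRB (A : {set 'I_n}) : nat :=
  #|[set ef : edge * edge | (ef.1 \in MST A) && (ef.2 \in MST (~: A)) &&
      `[< seg_cross (p ef.1.1) (p ef.1.2) (p ef.2.1) (p ef.2.2) >]]|.

Definition cr : nat := \max_(A : {set 'I_n}) crRB A.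

Definition in_hull_of_others (i : 'I_n) : Prop :=
  exists lam : 'I_n -> R,
    [/\ forall j, 0 <= lam j, lam i = 0, \sum_j lam j = 1,
        \sum_j lam j * (p j).1 = (p i).1 &
        \sum_j lam j * (p j).2 = (p i).2].

Definition convex_position : Prop := forall i, ~ in_hull_of_others i.

End MSTCrossings.

(* Main.v *)
Require Import Defs.
From HB Require Import structures.
From mathcomp Require Import all_boot all_order all_algebra.
From mathcomp Require Import boolp reals.
From mathcomp Require Import ring lra.

Set Implicit Arguments.
Unset Strict Implicit.
Unset Printing Implicit Defensive.
Import Order.TTheory GRing.Theory Num.Theory.
Local Open Scope ring_scope.

Section Pts.
Variable R : realType.
Definition orient (a b c : R * R) : R :=
  (b.1 - a.1) * (c.2 - a.2) - (b.2 - a.2) * (c.1 - a.1).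
Lemma diffE (a b c d : R*R) : orient c d a - orient c d b = orient a b d - orient a b c.
Proof. rewrite /orient; ring. Qed.
Lemma inter (a b c d : R*R) : orient a b c - orient a b d != 0 ->
  (1 - orient c d a / (orient c d a - orient c d b)) * a.1 + orient c d a / (orient c d a - orient c d b) * b.1
  = (1 - orient a b c / (orient a b c - orient a b d)) * c.1 + orient a b c / (orient a b c - orient a b d) * d.1 /\
  (1 - orient c d a / (orient c d a - orient c d b)) * a.2 + orient c d a / (orient c d a - orient c d b) * b.2
  = (1 - orient a b c / (orient a b c - orient a b d)) * c.2 + orient a b c / (orient a b c - orient a b d) * d.2.
Proof.
move=> H.
have H2 : orient c d a - orient c d b != 0 by rewrite diffE -opprB oppr_eq0.
move: H H2; rewrite /orient.
case: a b c d => [a1 a2] [b1 b2] [c1 c2] [d1 d2] /= H H2.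
by split; field; rewrite H H2.
Qed.

Definition combo (x a c d : R * R) := exists al be ga : R,
  [/\ 0 <= al, 0 <= be, 0 <= ga, al + be + ga = 1 &
   x.1 = al * a.1 + be * c.1 + ga * d.1 /\ x.2 = al * a.2 + be * c.2 + ga * d.2].

Lemma cross_cases (a b c d : R*R) :
  orient a b c * orient a b d < 0 -> orient c d a != 0 -> orient c d b != 0 ->
  seg_cross a b c d \/ combo b a c d \/ combo a b c d.
Proof.
move=> HD HE1 HE2.
set D1 := orient a b c in HD *; set D2 := orient a b d in HD *.
set E1 := orient c d a in HE1 *; set E2 := orient c d b in HE2 *.
have HDD : D1 - D2 != 0.
  apply/negP => /eqP e; have e' : D1 = D2 by apply/eqP; rewrite -subr_eq0 e.
  by move: HD; rewrite e' ltNge sqr_ge0.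
have [Ix Iy] := inter HDD; rewrite -/D1 -/D2 -/E1 -/E2 in Ix Iy.
have HEE : E1 - E2 != 0 by rewrite /E1 /E2 diffE -opprB oppr_eq0.
set s := D1 / (D1 - D2) in Ix Iy; set t := E1 / (E1 - E2) in Ix Iy.
have hs : s * (D1 - D2) = D1 by rewrite /s mulfVK.
have ht : t * (E1 - E2) = E1 by rewrite /t mulfVK.
have s01 : 0 <= s <= 1.
  have [D1p|D1n] := ltP 0 D1.
    have D2n : D2 < 0 by nra.
    apply/andP; split; nra.
  have D1n' : D1 < 0 by rewrite lt_neqAle D1n andbT; apply: contraTneq HD => ->; rewrite mul0r ltxx.
  have D2p : 0 < D2 by nra.
  apply/andP; split; nra.
move/andP: s01 => [s0 s1].
have [E12|E12] := ltP (E1 * E2) 0.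
  left; exists t, s; split; [| by apply/andP | exact: Ix | exact: Iy].
  have [E1p|E1n] := ltP 0 E1.
    have E2n : E2 < 0 by nra.
    apply/andP; split; nra.
  have E1n' : E1 < 0 by rewrite lt_neqAle E1n andbT.
  have E2p : 0 < E2 by nra.
  apply/andP; split; nra.
right.
have E12p : 0 < E1 * E2 by rewrite lt_neqAle E12 andbT eq_sym mulf_neq0.
have tout : t < 0 \/ 1 < t.
  have [t0|t0] := ltP t 0; first by left.
  right; have [E1p|E1n] := ltP 0 E1.
    have E2p : 0 < E2 by nra.
    nra.
  have E1n' : E1 < 0 by rewrite lt_neqAle E1n andbT.
  have E2n : E2 < 0 by nra.
  nra.
case: tout => [tn|tp].
- right.
  have t1 : 1 - t != 0 by apply/negP => /eqP e; nra.
  exists (- t / (1 - t)), ((1 - s) / (1 - t)), (s / (1 - t)); split.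
  + apply: divr_ge0; lra.
  + apply: divr_ge0; lra.
  + apply: divr_ge0; lra.
  + by field.
  + split.
      have -> : a.1 = ((1 - s) * c.1 + s * d.1 - t * b.1) / (1 - t) by rewrite -Ix; field.
      by field.
    have -> : a.2 = ((1 - s) * c.2 + s * d.2 - t * b.2) / (1 - t) by rewrite -Iy; field.
    by field.
- left.
  have t1 : t != 0 by apply/negP => /eqP e; nra.
  exists ((t - 1) / t), ((1 - s) / t), (s / t); split.
  + apply: divr_ge0; lra.
  + apply: divr_ge0; lra.
  + apply: divr_ge0; lra.
  + by field.
  + split.
      have -> : b.1 = ((1 - s) * c.1 + s * d.1 - (1 - t) * a.1) / t by rewrite -Ix; field.
      by field.
    have -> : b.2 = ((1 - s) * c.2 + s * d.2 - (1 - t) * a.2) / t by rewrite -Iy; field.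
    by field.
Qed.
Definition rhp (o x : R * R) := 0 < x.1 - o.1 \/ (x.1 = o.1 /\ 0 < x.2 - o.2).

Lemma ang_trans (o q s t : R * R) : rhp o q -> rhp o s -> rhp o t ->
  0 < orient o q s -> 0 < orient o s t -> 0 < orient o q t.
Proof.
case: o q s t => [o1 o2] [q1 q2] [s1 s2] [t1 t2]; rewrite /rhp /orient /=.
move=> Hq Hs Ht H1 H2.
have key : (s1 - o1) * ((q1 - o1) * (t2 - o2) - (q2 - o2) * (t1 - o1)) =
  (q1 - o1) * ((s1 - o1) * (t2 - o2) - (s2 - o2) * (t1 - o1)) +
  (t1 - o1) * ((q1 - o1) * (s2 - o2) - (q2 - o2) * (s1 - o1)) by ring.
case: Hs => [Hs|[Hs1 Hs2]].
  case: Hq => [Hq|[Hq1 Hq2]].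
    case: Ht => [Ht|[Ht1 Ht2]]; nra.
  case: Ht => [Ht|[Ht1 Ht2]].
    rewrite Hq1 in H1 key *; nra.
  rewrite Hq1 Ht1 in H1 H2 key *; nra.
exfalso; rewrite Hs1 in H1 H2.
case: Hq => [Hq|[Hq1 Hq2]]; case: Ht => [Ht|[Ht1 Ht2]]; try rewrite Hq1 in H1; try rewrite Ht1 in H2; nra.
Qed.

Lemma tri_in (o a c b : R * R) : 0 < orient o a c -> 0 < orient o c b -> 0 < orient o a b ->
  0 <= orient a b c -> combo c o a b.
Proof.
move=> H1 H2 H3 H4.
have HD : orient o a b != 0 by rewrite gt_eqF.
exists (orient a b c / orient o a b), (orient o c b / orient o a b), (orient o a c / orient o a b).
split.
- by apply: divr_ge0 => //; apply: ltW.
- by apply: divr_ge0; apply: ltW.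
- by apply: divr_ge0; apply: ltW.
- move: HD; rewrite /orient => HD; by field.
- move: HD; rewrite /orient; case: o a b c {H1 H2 H3 H4} => [o1 o2] [a1 a2] [b1 b2] [c1 c2] /= HD.
  by split; field.
Qed.
End Pts.

Section Graph.
Variable n : nat.
Lemma edge_count (S : {set 'I_n}) (E : {set edge n}) :
  connected_on S E -> (#|S| <= #|E|.+1)%N.
Proof.
move=> conn.
have [-> | [r rS]] := set_0Vmem S; first by rewrite cards0.
pose reach (m : nat) (v : 'I_n) : bool :=
  `[< exists s, [/\ size s = m, path (adj E) r s & last r s = v] >].
pose d (v : 'I_n) : nat :=
  match pselect (exists m, reach m v) with left H => ex_minn H | right _ => 0%N end.
have dP v m : reach m v -> reach (d v) v /\ (d v <= m)%N.
  move=> Hm; rewrite /d; case: pselect => [H|H]; last by exfalso; apply: H; exists m.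
  by case: ex_minnP => k Hk Hmin; split => //; apply: Hmin.
have par v : v \in S -> v != r -> exists u, adj E u v && (d u < d v)%N.
  move=> vS vr.
  have [s [ps ls]] := conn r v rS vS.
  have [/asboolP [s' [sz ps' ls']] _] := dP v (size s) (asboolT (ex_intro _ s (And3 erefl ps ls))).
  move: sz ps' ls'; case/lastP: s' => [|s' w].
    by move=> _ _ /= e; rewrite e eqxx in vr.
  rewrite last_rcons size_rcons rcons_path => sz /andP [ps' aw] wv.
  exists (last r s'); rewrite -wv aw /=.
  have [_ ] := dP (last r s') (size s') (asboolT (ex_intro _ s' (And3 erefl ps' erefl))).
  by rewrite wv -sz ltnS.
pose h (e : edge n) : 'I_n := if (d e.1 < d e.2)%N then e.2 else e.1.
have sub : S :\ r \subset h @: E.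
  apply/subsetP => v; rewrite !inE => /andP [vr vS].
  have [u /andP [/orP [uv|vu] duv]] := par v vS vr.
    by apply/imsetP; exists (u, v) => //; rewrite /h /= duv.
  apply/imsetP; exists (v, u) => //; rewrite /h /=.
  by rewrite ltnNge (ltnW duv).
rewrite (cardsD1 r) rS add1n ltnS.
exact: leq_trans (subset_leq_card sub) (leq_imset_card _ _).
Qed.

Lemma path_cross (B : {set 'I_n}) (E : {set edge n}) (R : realType) (f : 'I_n -> R) :
  edges_in B E -> (forall x, x \in B -> f x != 0) ->
  forall x s, x \in B -> path (adj E) x s -> 0 < f x -> f (last x s) < 0 ->
  exists e, e \in E /\ f e.1 * f e.2 < 0.
Proof.
move=> EB fB x s; elim: s x => [|y s IH] x xB /=.
  by move=> _ h1 h2; exfalso; move: (lt_trans h2 h1); rewrite ltxx.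
case/andP => axy ps fx fl.
have yB : y \in B.
  by case/orP: axy => [/EB [_ _ ->] | /EB [_ -> _]].
have [fy|fy] := ltP 0 (f y); first exact: IH yB ps fy fl.
have fy' : f y < 0 by rewrite lt_neqAle fy andbT fB.
case/orP: axy => [xy|yx].
  by exists (x, y); split => //=; rewrite pmulr_rlt0.
by exists (y, x); split => //=; rewrite nmulr_rlt0.
Qed.
End Graph.

Section Idx.
Variable R : realType.
Variable n : nat.
Variable p : 'I_n -> R * R.
Lemma sum_delta (F : 'I_n -> R) i : \sum_x (x == i)%:R * F x = F i.
Proof.
rewrite (bigD1 i) //= eqxx mul1r big1 ?addr0 // => x /negbTE ->; by rewrite mul0r.
Qed.

Lemma hull3 l i j k (a b c : R) :
  i != l -> j != l -> k != l -> 0 <= a -> 0 <= b -> 0 <= c -> a + b + c = 1 ->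
  (p l).1 = a * (p i).1 + b * (p j).1 + c * (p k).1 ->
  (p l).2 = a * (p i).2 + b * (p j).2 + c * (p k).2 ->
  in_hull_of_others p l.
Proof.
move=> il jl kl a0 b0 c0 s1 e1 e2.
exists (fun x => a * (x == i)%:R + b * (x == j)%:R + c * (x == k)%:R); split.
- move=> x; rewrite !addr_ge0 // mulr_ge0 //.
- by rewrite ![l == _]eq_sym (negbTE il) (negbTE jl) (negbTE kl) !mulr0 !addr0.
- rewrite !big_split /= -!mulr_sumr.
  have H (y : 'I_n) : \sum_(x : 'I_n) (x == y)%:R = 1 :> R.
    by rewrite (bigD1 y) //= eqxx big1 ?addr0 // => x /negbTE ->.
  by rewrite !H !mulr1.
- rewrite e1.
  have -> : \sum_j0 (a * (j0 == i)%:R + b * (j0 == j)%:R + c * (j0 == k)%:R) * (p j0).1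
    = a * \sum_x (x == i)%:R * (p x).1 + b * \sum_x (x == j)%:R * (p x).1
      + c * \sum_x (x == k)%:R * (p x).1.
    rewrite !mulr_sumr -!big_split /=; apply: eq_bigr => x _; ring.
  by rewrite !sum_delta.
- rewrite e2.
  have -> : \sum_j0 (a * (j0 == i)%:R + b * (j0 == j)%:R + c * (j0 == k)%:R) * (p j0).2
    = a * \sum_x (x == i)%:R * (p x).2 + b * \sum_x (x == j)%:R * (p x).2
      + c * \sum_x (x == k)%:R * (p x).2.
    rewrite !mulr_sumr -!big_split /=; apply: eq_bigr => x _; ring.
  by rewrite !sum_delta.
Qed.

End Idx.

Lemma orient_xx (R : realType) (a b : R * R) : orient a b b = 0.
Proof. rewrite /orient; ring. Qed.
Lemma orient_cyc (R : realType) (a b c : R * R) : orient a b c = orient b c a.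
Proof. rewrite /orient; ring. Qed.
Lemma orient_swap (R : realType) (a b c : R * R) : orient a b c = - orient b a c.
Proof. rewrite /orient; ring. Qed.
Lemma orient_swap2 (R : realType) (a b c : R * R) : orient a b c = - orient a c b.
Proof. rewrite /orient; ring. Qed.

Lemma half_aux (n j : nat) : (j < n./2)%N -> (j.*2.+1 < n)%N.
Proof.
move=> H.
have h1 : (j.+1.*2 <= n./2.*2)%N by rewrite leq_double.
have h2 : (n./2.*2 <= n)%N by rewrite -{2}(odd_double_half n) leq_addl.
by rewrite doubleS in h1; apply: leq_trans h2; apply: leq_trans h1.
Qed.

Section Main.
Variable R : realType.
Variable n : nat.
Variable p : 'I_n -> R * R.
Hypothesis gen : generic p.
Hypothesis cvx : convex_position p.
Variable w0 : 'I_n.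

Lemma MST_spec S : is_MST p S (MST p S).
Proof.
rewrite /MST; case: pickP => [E /asboolP //|H] /=.
case: gen => _ _ /(_ S) [E [HE _]].
by move: (H E); rewrite asboolT.
Qed.

Lemma inj : injective p. Proof. by case: gen. Qed.

Lemma onz i j k : i != j -> j != k -> i != k -> orient (p i) (p j) (p k) != 0.
Proof. by case: gen => _ gp _; apply: gp. Qed.

Lemma no_combo l i j k : i != l -> j != l -> k != l -> ~ combo (p l) (p i) (p j) (p k).
Proof.
move=> il jl kl [al [be [ga [h1 h2 h3 h4 [h5 h6]]]]].
exact: (cvx (hull3 il jl kl h1 h2 h3 h4 h5 h6)).
Qed.

Lemma seg_idx a b c d : a != b -> c != d -> c != a -> c != b -> d != a -> d != b ->
  orient (p a) (p b) (p c) * orient (p a) (p b) (p d) < 0 ->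
  seg_cross (p a) (p b) (p c) (p d).
Proof.
move=> ab cd ca cb da db H.
have E1 : orient (p c) (p d) (p a) != 0 by apply: onz.
have E2 : orient (p c) (p d) (p b) != 0 by apply: onz.
case: (cross_cases H E1 E2) => [//|[]] Hc; exfalso.
- by apply: (no_combo _ _ _ Hc) => //; rewrite eq_sym.
- by apply: (no_combo _ _ _ Hc) => //; rewrite eq_sym.
Qed.

Definition i1 := Order.arg_min w0 xpredT (fun i => (p i).1).
Definition i0 := Order.arg_min i1 (fun i => (p i).1 == (p i1).1) (fun i => (p i).2).

Lemma lexmin q : (p i0).1 <= (p q).1 /\ ((p q).1 = (p i0).1 -> (p i0).2 <= (p q).2).
Proof.
have H1 q' : (p i1).1 <= (p q').1.
  by rewrite /i1; case: arg_minP => // k _ Hk; apply: Hk.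
rewrite /i0; case: (@arg_minP _ _ _ i1 (fun i => (p i).1 == (p i1).1) (fun i => (p i).2) (eqxx _)).
move=> j /eqP Hj Hmin; rewrite Hj; split => // Hq.
by apply: Hmin; rewrite /= Hq.
Qed.

Lemma rhp0 q : q != i0 -> rhp (p i0) (p q).
Proof.
move=> qi; have [le1 le2] := lexmin q.
move: le1; rewrite le_eqVlt => /orP [/eqP e|l]; last by left; rewrite subr_gt0.
right; split => //; rewrite subr_gt0 lt_neqAle le2 // andbT.
apply/negP => /eqP e2; move/negP: qi; apply; apply/eqP; apply: inj.
by case: (p i0) (p q) e e2 => [x1 x2] [y1 y2] /= -> ->.
Qed.

Definition ltr (q r : 'I_n) : bool :=
  ((q == i0) && (r != i0)) || [&& q != i0, r != i0 & 0 < orient (p i0) (p q) (p r)].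

Lemma ltr_irr q : ~~ ltr q q.
Proof. by rewrite /ltr orient_xx ltxx !andbF; case: (q == i0). Qed.

Lemma ltr_trans q r s : ltr q r -> ltr r s -> ltr q s.
Proof.
rewrite /ltr; case: (eqVneq q i0) => [->|qi] /=.
  by rewrite orbF => ri; rewrite (negbTE ri) /= orbF => /andP [-> _].
case: (eqVneq r i0) => [->|ri] //= H1.
case: (eqVneq s i0) => [->|si] //= H2.
apply: ang_trans H1 H2; exact: rhp0.
Qed.

Lemma ltr_total q r : q != r -> ltr q r || ltr r q.
Proof.
move=> qr; rewrite /ltr.
case: (eqVneq q i0) => [qi|qi]; case: (eqVneq r i0) => [ri|ri]; rewrite ?qi ?ri ?eqxx //=.
- by rewrite qi ri eqxx in qr.
- have := onz (i := i0) (j := q) (k := r); rewrite qr ![i0 == _]eq_sym qi ri => /(_ isT isT isT).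
  rewrite (orient_swap2 (p i0) (p r)) oppr_gt0.
  by case: ltgtP.
Qed.

Definition rank (q : 'I_n) : nat := #|[set r | ltr r q]|.

Lemma rank_lt q r : ltr q r -> (rank q < rank r)%N.
Proof.
move=> qr; apply: proper_card; apply/properP; split.
  by apply/subsetP => x; rewrite !inE => xq; apply: ltr_trans xq qr.
by exists q; rewrite !inE // ltr_irr.
Qed.

Lemma rank_inj : injective rank.
Proof.
move=> q r e; apply/eqP; apply/negPn/negP => qr.
by case/orP: (ltr_total qr) => /rank_lt; rewrite e ltnn.
Qed.

Lemma rank_rev q r : (rank q < rank r)%N -> ltr q r.
Proof.
move=> h; case: (eqVneq q r) => [e|qr]; first by rewrite e ltnn in h.
case/orP: (ltr_total qr) => // /rank_lt h2.
by move: (ltn_trans h h2); rewrite ltnn.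
Qed.

Lemma rank_ub q : (rank q < n)%N.
Proof.
rewrite -[n]card_ord -cardsT; apply: proper_card; apply/properP; split.
  exact: subsetT.
by exists q; rewrite !inE // ltr_irr.
Qed.

Lemma rank_i0 : rank i0 = 0%N.
Proof.
apply/eqP; rewrite cards_eq0; apply/eqP/setP => x.
by rewrite !inE /ltr eqxx !andbF.
Qed.

Definition rk (q : 'I_n) : 'I_n := Ordinal (rank_ub q).

Lemma rk_inj : injective rk.
Proof. by move=> q r /(congr1 val) /= /rank_inj. Qed.

Definition rinv := invF rk_inj.

Lemma rank_rinv (y : 'I_n) : rank (rinv y) = y.
Proof. by have := f_invF rk_inj y => /(congr1 val). Qed.

Definition A := [set q | odd (rank q)].

Lemma card_A : (n./2 <= #|A|)%N.
Proof.
pose g (j : 'I_(n./2)) : 'I_n := rinv (Ordinal (half_aux (ltn_ord j))).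
have ginj : injective g.
  move=> j k /(congr1 rank); rewrite !rank_rinv /= => /eqP; rewrite eqSS.
  by move/eqP/double_inj => e; apply: val_inj.
rewrite -(card_ord (n./2)) -cardsT -(card_imset _ ginj).
apply: subset_leq_card; apply/subsetP => x /imsetP [j _ ->].
by rewrite inE rank_rinv /= odd_double.
Qed.

Lemma i0_notA : i0 \in ~: A.
Proof. by rewrite !inE rank_i0. Qed.

Lemma key a b : a \in A -> b \in A -> (rank a < rank b)%N ->
  exists c, [/\ c \in ~: A, 0 < orient (p a) (p b) (p i0) & orient (p a) (p b) (p c) < 0].
Proof.
rewrite !inE => oa ob ab.
have kb : ((rank a).+1 < rank b)%N.
  rewrite ltn_neqAle ab andbT; apply/negP => /eqP e.
  by move: ob; rewrite -e /= oa.
have kn : ((rank a).+1 < n)%N := ltn_trans kb (rank_ub b).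
pose c := rinv (Ordinal kn).
have rc : rank c = (rank a).+1 by rewrite rank_rinv.
exists c.
have ai : a != i0 by apply/negP => /eqP e; move: oa; rewrite e rank_i0.
have bi : b != i0 by apply/negP => /eqP e; move: ob; rewrite e rank_i0.
have ci : c != i0 by apply/negP => /eqP e; move: rc; rewrite e rank_i0.
have ac : ltr a c by apply: rank_rev; rewrite rc.
have cb : ltr c b by apply: rank_rev; rewrite rc.
have abl : ltr a b by apply: rank_rev.
move: ac cb abl; rewrite /ltr (negbTE ai) (negbTE ci) /= ?bi ?ai ?ci /= => H1 H2 H3.
have H0 : 0 < orient (p a) (p b) (p i0) by rewrite orient_cyc orient_cyc.
split => //.
  by rewrite !inE rc /= oa.
have ca : c != a by apply/negP => /eqP e; move: rc; rewrite e => /n_Sn.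
have cbn : c != b by apply/negP => /eqP e; move: kb; rewrite -rc e ltnn.
have ab' : a != b by apply/negP => /eqP e; move: ab; rewrite e ltnn.
have nz : orient (p a) (p b) (p c) != 0 by apply: onz; rewrite // eq_sym.
rewrite lt_neqAle nz /=; rewrite leNgt; apply/negP => pos.
apply: (@no_combo c i0 a b); rewrite 1?[_ == c]eq_sym //.
exact: (tri_in H1 H2 H3 (ltW pos)).
Qed.

Lemma main_ineq : (n./2 - 1 <= crRB p A)%N.
Proof.
have [[sR cR _] _] := MST_spec A.
have [[sB cB _] _] := MST_spec (~: A).
have cnt := edge_count cR.
suff sub : MST p A \subset [set ef.1 | ef in [set ef : edge n * edge n | (ef.1 \in MST p A) && (ef.2 \in MST p (~: A)) &&
      `[< seg_cross (p ef.1.1) (p ef.1.2) (p ef.2.1) (p ef.2.2) >]]].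
  have h1 : (#|MST p A| <= crRB p A)%N.
    exact: leq_trans (subset_leq_card sub) (leq_imset_card _ _).
  apply: leq_trans h1; rewrite leq_subLR add1n.
  exact: leq_trans card_A cnt.
apply/subsetP => e eA.
have [ab aA bA] := sR e eA.
have ab' : e.1 != e.2 by apply/negP => /eqP ee; move: ab; rewrite ee ltnn.
pose f x := orient (p e.1) (p e.2) (p x).
have fB x : x \in ~: A -> f x != 0.
  rewrite inE => xA; apply: onz => //.
    by apply/negP => /eqP ee; move: xA; rewrite -ee bA.
  by apply/negP => /eqP ee; move: xA; rewrite -ee aA.
have [c [cnA fc]] : exists c, c \in ~: A /\ f i0 * f c < 0.
  case: (ltngtP (rank e.1) (rank e.2)) => [lt|gt|eq].
  - have [c [cnA h1 h2]] := key aA bA lt.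
    by exists c; split => //; rewrite /f pmulr_rlt0.
  - have [c [cnA h1 h2]] := key bA aA gt.
    exists c; split => //; rewrite /f orient_swap [orient _ _ (p c)]orient_swap.
    by rewrite mulrNN pmulr_rlt0.
  - by move: ab'; rewrite (rank_inj eq) eqxx.
have [e' [e'B fe']] : exists e', e' \in MST p (~: A) /\ f e'.1 * f e'.2 < 0.
  have [pos|neg] := ltP 0 (f i0).
    have fcn : f c < 0 by move: fc; rewrite pmulr_rlt0.
    have [s [ps ls]] := cB i0 c i0_notA cnA.
    by apply: (path_cross sB fB i0_notA ps pos); rewrite ls.
  have fin : f i0 < 0 by rewrite lt_neqAle neg andbT fB // i0_notA.
  have fcp : 0 < f c by move: fc; rewrite nmulr_rlt0.
  have [s [ps ls]] := cB c i0 cnA i0_notA.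
  by apply: (path_cross sB fB cnA ps fcp); rewrite ls.
have [ab2 a2B b2B] := sB e' e'B.
have ne x y : x \in A -> y \in ~: A -> y != x.
  by move=> xA; rewrite inE; apply: contraNneq => ->.
apply/imsetP; exists (e, e') => //.
rewrite inE /= eA e'B /=; apply/asboolP.
apply: seg_idx => //; try exact: ne.
by apply/negP => /eqP ee; move: ab2; rewrite ee ltnn.
Qed.
End Main.

Unset Implicit Arguments.

Theorem theorem4 (R : realType) (n : nat) (p : 'I_n -> R * R) :
  generic p -> convex_position p -> (n./2 - 1 <= cr p)%N.
Proof.
case: n p => [|m] p gen cvx; first by [].
apply: leq_trans (main_ineq gen cvx ord0) _.
exact: (@leq_bigmax {set 'I_m.+1} (crRB p) _).
Qed.
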